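(* Let $0\le l\le\nu+\mu$ and suppose there exists $l_0\le l$ such that $|S_l^{l_0}(0)|=1$. Then $0\in T_l(M/K)$, i.e. there exists $l_1\le l$ with $|S_l^{l_1}(0)|=1$ and $S_l^a(0)=\varnothing$ for all $0\le a<l_1$.
   Context: Let $p$ be a prime and $K$ a field complete with respect to a discrete valuation whose residue field is perfect of characteristic $p$; fix a separable closure $K^{sep}$; $v_p$ is the $p$-adic valuation on $\mathbb{Z}$. $L/K$ is a finite totally ramified subextension of $K^{sep}/K$ of degree $n>1$ and $M/L$ a finite totally ramified subextension of $K^{sep}/L$ of degree $m>1$; $\nu=v_p(n)$, $\mu=v_p(m)$. For any such totally ramified extension $E/F$ of degree $N>1$ with $\eta=v_p(N)$, the indices of inseparability $i_0,\dots,i_\eta$ are defined by: choose uniformizers $\pi_F,\pi_E$, let $\hat{\mathcal{F}}(X)=\sum_{h\ge0}a_hX^{h+N}$ be the unique series with coefficients in the Teichmüller representatives of the residue field such that $\hat{\mathcal{F}}(\pi_E)=\pi_F$, put $\tilde{\imath}_j=\min\{h\ge0:v_p(h+N)\le j,\ a_h\ne0\}$ (or $\infty$), $i_\eta=0$ and $i_j=\min\{\tilde{\imath}_j,i_{j+1}+v_E(p)\}$ for $j=\eta-1,\dots,0$ ($v_E$ normalized with $v_E(E^\times)=\mathbb{Z}$, $v_E(p)=\infty$ in characteristic $p$). Set $\tilde{\phi}_{E/F}^j(x)=i_j+p^jx$ and $\phi_{E/F}^j(x)=\min\{\tilde{\phi}_{E/F}^{j_0}(x):0\le j_0\le j\}$.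 Let $i_j$ be the indices of $L/K$; define $\tilde{\phi}_{L/K}^{j,m}(x)=mi_j+p^jx$ and $\phi_{L/K}^{j,m}(x)=m\phi_{L/K}^j(x/m)$. For $0\le l\le\nu+\mu$ let $\Omega_l=\{(j,k):0\le j\le\nu,\ 0\le k\le\mu,\ j+k=l\}$, $\lambda_{M/K}^l(x)=\min\{\phi_{L/K}^{j,m}(\phi_{M/L}^k(x)):(j,k)\in\Omega_l\}$, and for $0\le a\le l$, $S_l^a(x)=\{(j,k)\in\Omega_a:\tilde{\phi}_{L/K}^{j,m}(\tilde{\phi}_{M/L}^k(x))=\lambda_{M/K}^l(x)\}$. Finally $T_l(M/K)=\{t\ge0:\exists\,l_1\le l\text{ with }|S_l^{l_1}(t)|=1\text{ and }|S_l^a(t)|=0\text{ for }0\le a<l_1\}$. *)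

(* Defs.v *)
From HB Require Import structures.
From mathcomp Require Import all_boot all_order all_algebra.
From Stdlib Require Import ClassicalDescription.
Set Implicit Arguments. Unset Strict Implicit. Unset Printing Implicit Defensive.
Import Order.TTheory GRing.Theory Num.Theory.

(* Extended naturals N u {oo}: [None] stands for +oo. *)
Definition ominn (x y : option nat) : option nat :=
  match x, y with
  | None, _ => y | _, None => x
  | Some a, Some b => Some (minn a b) end.
Definition oaddn (x y : option nat) : option nat :=
  match x, y with Some a, Some b => Some (a + b) | _, _ => None end.

(* ---- Indices of inseparability of a totally ramified E/F of degree N ----
   The series F^(X) = sum_h a_h X^(h+N) only enters through its support:
   [a h] = true  iff  a_h <> 0.   [vEp] = v_E(p)  (None = oo, char p). *)

Definition tilde_idx (p N : nat) (a : nat -> bool) (j : nat) : option nat :=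
  match excluded_middle_informative
          (exists h, (fun h => a h && (logn p (h + N) <= j)%N) h) with
  | left H => Some (@ex_minn (fun h => a h && (logn p (h + N) <= j)%N) H)
  | right _ => None
  end.

(* i_eta = 0, i_j = min(tilde i_j, i_(j+1) + v_E(p)); computed by
   backward recursion on d = eta - j *)
Fixpoint idx_rec (p N : nat) (a : nat -> bool) (vEp : option nat) (d : nat)
  : option nat :=
  match d with
  | 0 => Some 0
  | d'.+1 => ominn (tilde_idx p N a (logn p N - d'.+1))
                   (oaddn (idx_rec p N a vEp d') vEp)
  end.

Definition ins_idx (p N : nat) (a : nat -> bool) (vEp : option nat) (j : nat)
  : option nat := idx_rec p N a vEp (logn p N - j).

(* ---- the functions phi, over Q u {+oo} (None = +oo) ---- *)
Local Open Scope ring_scope.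

Definition omin (x y : option rat) : option rat :=
  match x, y with
  | None, _ => y | _, None => x
  | Some a, Some b => Some (Num.min a b) end.

Definition tphi (i : nat -> option nat) (p j : nat) (x : option rat)
  : option rat :=
  match i j, x with
  | Some ij, Some x => Some (ij%:R + (p ^ j)%:R * x)
  | _, _ => None end.

Definition phi (i : nat -> option nat) (p j : nat) (x : option rat)
  : option rat :=
  \big[omin/None]_(j0 < j.+1) tphi i p j0 x.

Definition tphim (i : nat -> option nat) (p m j : nat) (x : option rat)
  : option rat :=
  match i j, x with
  | Some ij, Some x => Some ((m * ij)%:R + (p ^ j)%:R * x)
  | _, _ => None end.

Definition phim (i : nat -> option nat) (p m j : nat) (x : option rat)
  : option rat :=
  omap (fun z => m%:R * z) (phi i p j (omap (fun z => z / m%:R) x)).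

(* ---- the tower M/L/K ----
   p : residue characteristic; n = [L:K], m = [M:L];
   eK = v_K(p) (None = oo in characteristic p), so v_L(p) = n eK and
   v_M(p) = m n eK;  aL, aM : supports of the series for L/K and M/L. *)
Definition vLp (n : nat) (eK : option nat) := omap (muln n) eK.
Definition vMp (n m : nat) (eK : option nat) := omap (muln (m * n)) eK.

Definition idxLK p n eK aL := ins_idx p n aL (vLp n eK).
Definition idxML p n m eK aM := ins_idx p m aM (vMp n m eK).

Definition lam p n m eK aL aM (l : nat) (x : rat) : option rat :=
  \big[omin/None]_(j < (logn p n).+1 | (j <= l)%N && (l - j <= logn p m)%N)
     phim (idxLK p n eK aL) p m j
          (phi (idxML p n m eK aM) p (l - j) (Some x)).

Definition Sla p n m eK aL aM (l a : nat) (x : rat)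
  : {set 'I_(logn p n).+1 * 'I_(logn p m).+1} :=
  [set jk : 'I_(logn p n).+1 * 'I_(logn p m).+1 | ((jk.1 : nat) + jk.2 == a)%N &&
            (tphim (idxLK p n eK aL) p m jk.1
                   (tphi (idxML p n m eK aM) p jk.2 (Some x))
             == lam p n m eK aL aM l x)].

Definition in_T p n m eK aL aM (l : nat) (t : rat) : Prop :=
  0 <= t /\
  exists l1, (l1 <= l)%N /\ #|Sla p n m eK aL aM l l1 t| = 1%N /\
     forall a, (a < l1)%N -> Sla p n m eK aL aM l a t = set0.

(* Main.v *)
Require Import Defs.
From HB Require Import structures.
From mathcomp Require Import all_boot all_order all_algebra.
From Stdlib Require Import ClassicalDescription.
From mathcomp Require Import zify ring.
Import Order.TTheory GRing.Theory Num.Theory.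
Set Implicit Arguments. Unset Strict Implicit.
Definition onle (x y : option nat) : bool :=
  match x, y with _, None => true | Some a, Some b => (a <= b)%N | None, Some _ => false end.

Lemma onle_trans y x z : onle x y -> onle y z -> onle x z.
Proof. by case: x; case: y; case: z => //= a b c; apply: leq_trans. Qed.

Lemma onle_minn x y z : onle x y -> onle x z -> onle x (ominn y z).
Proof. by case: x; case: y; case: z => //= a b c H1 H2; rewrite leq_min H1 H2. Qed.

Lemma ominn_le x y : onle (ominn x y) x.
Proof. by case: x; case: y => //= a b; rewrite geq_minl. Qed.

Lemma onle_add x v : onle x (oaddn x v).
Proof. by case: x; case: v => //= a b; rewrite leq_addr. Qed.

Lemma logn_ndvd p x : ~~ (p %| x)%N -> logn p x = 0%N.
Proof. move=> H; apply/eqP; rewrite -leqn0 leqNgt logn_gt0 mem_primes.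
by rewrite (negbTE H) !andbF. Qed.

Section Idx.
Variables (p N : nat) (a : nat -> bool) (v : option nat).

Lemma ins_ge j : (logn p N <= j)%N -> ins_idx p N a v j = Some 0%N.
Proof. by move=> H; rewrite /ins_idx (_ : logn p N - j = 0)%N //; lia. Qed.

Lemma ins_step j : (j < logn p N)%N ->
  ins_idx p N a v j = ominn (tilde_idx p N a j) (oaddn (ins_idx p N a v j.+1) v).
Proof.
move=> H; rewrite /ins_idx (_ : logn p N - j = (logn p N - j.+1).+1)%N; last lia.
by rewrite /= (_ : logn p N - (logn p N - j.+1).+1 = j)%N //; lia.
Qed.

Lemma tilde_mono j : onle (tilde_idx p N a j.+1) (tilde_idx p N a j).
Proof.
rewrite /tilde_idx.
case: (excluded_middle_informative _) => [H|H]; case: (excluded_middle_informative _) => [H'|H'] //=.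
- case: (ex_minnP H) => h _ Hmin; case: (ex_minnP H') => h' /andP [Hh1 Hh2] _.
  by apply: Hmin; rewrite Hh1 /=; exact: leqW.
- case: (ex_minnP H') => h /andP [Hh1 Hh2] _; exfalso; apply: H; exists h.
  by rewrite Hh1 /=; exact: leqW.
Qed.

Lemma ins_mono j : onle (ins_idx p N a v j.+1) (ins_idx p N a v j).
Proof.
case: (ltnP j (logn p N)) => Hj; last by rewrite !ins_ge //; apply: leqW.
rewrite (ins_step Hj); apply: onle_minn; last exact: onle_add.
case: (ltnP j.+1 (logn p N)) => Hj'.
  rewrite (ins_step Hj'); apply: onle_trans (ominn_le _ _) _; exact: tilde_mono.
by rewrite ins_ge //; case: tilde_idx.
Qed.

Lemma ins_fin (hf : v <> None \/ exists h, a h && (logn p (h + N) == 0)%N) j :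
  exists d, ins_idx p N a v j = Some d.
Proof.
rewrite /ins_idx; elim: (logn p N - j)%N => [|d [x IH]] /=; first by exists 0%N.
rewrite IH; case: hf => [hv|[h /andP [h1 /eqP h2]]].
  case: v hv => // e _; case: tilde_idx => [t|] /=; eexists; reflexivity.
rewrite /tilde_idx; case: (excluded_middle_informative _) => [H|H].
  by case: oaddn => [t|] /=; eexists; reflexivity.
by exfalso; apply: H; exists h; rewrite h1 h2.
Qed.

Lemma ins_pos (hv : v <> Some 0%N) (hN : (0 < logn p N)%N) :
  ins_idx p N a v (logn p N).-1 <> Some 0%N.
Proof.
have Hj : ((logn p N).-1 < logn p N)%N by lia.
rewrite (ins_step Hj) (_ : (logn p N).-1.+1 = logn p N); last lia.
rewrite ins_ge //; have -> : oaddn (Some 0%N) v = v by case: v hv.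
have Ht : tilde_idx p N a (logn p N).-1 <> Some 0%N.
  rewrite /tilde_idx; case: (excluded_middle_informative _) => [H|H] //.
  case: ex_minnP => h /andP [_ Hh] _ Hh0; case: Hh0 => Hh0; subst h.
  by rewrite add0n in Hh; lia.
case: tilde_idx Ht => [t|] Ht; case: v hv => [e|] hv //= [].
move/eqP; rewrite /minn; case: ltnP => _ /eqP ?; subst; [by apply: Ht|by apply: hv].
Qed.
End Idx.
Local Open Scope ring_scope.
Definition ole (x y : option rat) : bool :=
  match x, y with _, None => true | Some a, Some b => a <= b | None, Some _ => false end.

Lemma ole_trans y x z : ole x y -> ole y z -> ole x z.
Proof. by case: x; case: y; case: z => //= a b c H1 H2; apply: le_trans H1 H2. Qed.

Lemma ole_anti x y : ole x y -> ole y x -> x = y.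
Proof. by case: x; case: y => //= a b H1 H2; congr Some; apply/eqP; rewrite eq_le H1 H2. Qed.

Lemma omin_le x y : ole (omin x y) x.
Proof. by case: x; case: y => //= a b; rewrite ge_min lexx. Qed.
Lemma omin_le2 x y : ole (omin x y) y.
Proof. by case: x; case: y => //= a b; rewrite ge_min lexx orbT. Qed.

Lemma big_omin_le (I : eqType) (r : seq I) (P : pred I) (F : I -> option rat) i0 :
  i0 \in r -> P i0 -> ole (\big[omin/None]_(i <- r | P i) F i) (F i0).
Proof.
elim: r => //= x r IH; rewrite inE big_cons => /orP [/eqP <-|Hr] HP.
  by rewrite HP; apply: omin_le.
case: (P x); last exact: IH.
by apply: ole_trans (omin_le2 _ _) (IH Hr HP).
Qed.

Lemma phi_le i p K k x : (k <= K)%N -> ole (phi i p K x) (tphi i p k x).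
Proof.
move=> Hk; rewrite /phi; have -> : k = Ordinal (Hk : (k < K.+1)%N) by [].
by apply: big_omin_le => //; rewrite mem_index_enum.
Qed.

Lemma phim_le iL iM p m J K j k : (0 < m)%N -> (j <= J)%N -> (k <= K)%N ->
  ole (phim iL p m J (phi iM p K (Some 0))) (tphim iL p m j (tphi iM p k (Some 0))).
Proof.
move=> Hm HjJ HkK.
rewrite /tphim /tphi; case Hd: (iL j) => [d|]; case Hc: (iM k) => [c|] //=. all: try by case: (phim _ _ _ _ _).
have H1 := phi_le iM p (Some 0) HkK; rewrite /tphi Hc in H1.
case Ey: (phi iM p K (Some 0)) H1 => [y|] //= H1.
rewrite /phim /=.
have H2 := phi_le iL p (Some (y / m%:R)) HjJ; rewrite /tphi Hd in H2.
case Ez: (phi iL p J (Some (y / m%:R))) H2 => [z|] //= H2.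
rewrite mulr0 addr0 in H1; rewrite mulr0 addr0.
have Hm0 : (m%:R : rat) != 0 by rewrite pnatr_eq0 -lt0n.
apply: le_trans (_ : m%:R * (d%:R + (p ^ j)%:R * (y / m%:R)) <= _).
  by apply: ler_wpM2l => //; rewrite ler0n.
rewrite mulrDr natrM.
have -> : (m%:R : rat) * ((p ^ j)%:R * (y / m%:R)) = (p ^ j)%:R * y.
  by field.
by rewrite lerD2l; apply: ler_wpM2l => //; rewrite ler0n.
Qed.

Definition VV p n m eK aL aM (j k : nat) :=
  tphim (idxLK p n eK aL) p m j (tphi (idxML p n m eK aM) p k (Some 0)).

Lemma lam_le p n m eK aL aM l j k : (0 < m)%N -> (j <= logn p n)%N ->
  (k <= logn p m)%N -> (j + k <= l)%N -> (l <= logn p n + logn p m)%N ->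
  ole (lam p n m eK aL aM l 0) (VV p n m eK aL aM j k).
Proof.
move=> Hm Hj Hk Hl HL.
have HJ : (maxn j (l - logn p m) < (logn p n).+1)%N by lia.
apply: ole_trans (_ : ole _ (phim (idxLK p n eK aL) p m (Ordinal HJ)
   (phi (idxML p n m eK aM) p (l - Ordinal HJ) (Some 0)))) _.
  by apply: big_omin_le; [rewrite mem_index_enum | rewrite /=; lia].
by apply: phim_le => //=; lia.
Qed.
Lemma VV_some p n m eK aL aM j k d c :
  idxLK p n eK aL j = Some d -> idxML p n m eK aM k = Some c ->
  VV p n m eK aL aM j k = Some ((m * d)%:R + (p ^ j)%:R * c%:R).
Proof. by move=> Hd Hc; rewrite /VV /tphi Hc /tphim Hd mulr0 addr0. Qed.

Theorem lemma3p5 (p n m : nat) (eK : option nat) (aL aM : nat -> bool)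
  (hp : prime p) (hn : (1 < n)%N) (hm : (1 < m)%N)
  (heK : forall e, eK = Some e -> (0 < e)%N)
  (haL0 : aL 0%N) (haM0 : aM 0%N)
  (hsepL : eK = None -> exists h, aL h && ~~ (p %| h + n)%N)
  (hsepM : eK = None -> exists h, aM h && ~~ (p %| h + m)%N)
  (l : nat) (hl : (l <= logn p n + logn p m)%N)
  (h0 : exists l0, (l0 <= l)%N /\ #|Sla p n m eK aL aM l l0 0| = 1%N) :
  in_T p n m eK aL aM l 0.
Proof.

set iL := idxLK p n eK aL; set iM := idxML p n m eK aM.
set lm := lam p n m eK aL aM l 0.
set S := Sla p n m eK aL aM l.
have finL j : exists d, iL j = Some d.
  apply: ins_fin; case E: eK => [e|]; [left; by []|right].
  case: (hsepL E) => h /andP [h1 h2]; exists h; by rewrite h1 logn_ndvd.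
have finM j : exists d, iM j = Some d.
  apply: ins_fin; case E: eK => [e|]; [left; by []|right].
  case: (hsepM E) => h /andP [h1 h2]; exists h; by rewrite h1 logn_ndvd.
have monL j d d' : iL j = Some d -> iL j.+1 = Some d' -> (d' <= d)%N.
  by move=> H1 H2; have := ins_mono p n aL (vLp n eK) j; rewrite /iL /idxLK in H1 H2; rewrite H1 H2.
have monM j d d' : iM j = Some d -> iM j.+1 = Some d' -> (d' <= d)%N.
  by move=> H1 H2; have := ins_mono p m aM (vMp n m eK) j; rewrite /iM /idxML in H1 H2; rewrite H1 H2.
have iMmu : iM (logn p m) = Some 0%N by apply: ins_ge.
have iMpos : (0 < (logn p m))%N -> iM (logn p m).-1 <> Some 0%N.
  move=> Hmu; apply: ins_pos => //; rewrite /vMp; case E: eK => [e|] //= [].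
  move/eqP; rewrite !muln_eq0 => /orP [/orP [/eqP|/eqP]|/eqP] H; try lia.
  by have := heK e E; lia.
have memS a jk : (jk \in S a 0%R) =
    ((jk.1 + jk.2 == a)%N && (VV p n m eK aL aM jk.1 jk.2 == lm)).
  by rewrite inE.
have m0 : (0 < m)%N by lia.
have step a : (a < l)%N -> (#|S a 0%R| <= #|S a.+1 0%R|)%N.
  move=> Hal.
  pose f (jk : 'I_(logn p n).+1 * 'I_(logn p m).+1) :=
    if (jk.2 < (logn p m))%N then (jk.1, inord jk.2.+1 : 'I_(logn p m).+1)
    else (inord jk.1.+1 : 'I_(logn p n).+1, jk.2).
  have fS jk : jk \in S a 0%R -> f jk \in S a.+1 0%R.
    case: jk => j k; rewrite !memS /= => /andP [/eqP Hs /eqP HV].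
    have Hj := ltn_ord j; have Hk0 := ltn_ord k.
    rewrite /f /=; case: ltnP => Hk /=.
    - rewrite inordK; last lia.
      apply/andP; split; first by rewrite addnS Hs.
      apply/eqP; apply: ole_anti; last by apply: lam_le => //; lia.
      rewrite -HV; case: (finL j) => d Hd; case: (finM k) => c Hc.
      case: (finM k.+1) => c' Hc'.
      rewrite (VV_some Hd Hc) (VV_some Hd Hc') /= lerD2l.
      by apply: ler_wpM2l; rewrite ?ler0n // ler_nat; apply: monM Hc Hc'.
    - rewrite inordK; last lia.
      apply/andP; split; first by apply/eqP; rewrite ?inordK; lia.
      have Hkm : (k : nat) = (logn p m) by lia.
      apply/eqP; apply: ole_anti; last by apply: lam_le => //; lia.
      rewrite -HV Hkm; case: (finL j) => d Hd; case: (finL j.+1) => d' Hd'.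
      rewrite (VV_some Hd iMmu) (VV_some Hd' iMmu) /= !mulr0 !addr0 ler_nat.
      by apply: leq_mul => //; apply: monL Hd Hd'.
  have contra j : (0 < (logn p m))%N -> (j <= (logn p n))%N -> (j + (logn p m) <= l)%N ->
      VV p n m eK aL aM j (logn p m).-1 <> lm.
    move=> Hmu Hj Hjl HV.
    have H := lam_le eK aL aM m0 Hj (leqnn (logn p m)) Hjl hl; rewrite -/lm -HV in H.
    case: (finL j) => d Hd; case: (finM (logn p m).-1) => c Hc.
    rewrite (VV_some Hd Hc) (VV_some Hd iMmu) /= mulr0 lerD2l in H.
    have Hc0 : (c != 0)%N by apply/eqP => E; apply: (iMpos Hmu); rewrite Hc E.
    have Hp : (0 < p ^ j)%N by rewrite expn_gt0 prime_gt0.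
    move: H; rewrite -natrM lern0 muln_eq0 => /orP [/eqP E|/eqP E]; lia.
  have finj : {in S a 0%R &, injective f}.
    case=> j k [j' k']; rewrite !memS /= => /andP [/eqP Hs /eqP HV] /andP [/eqP Hs' /eqP HV'].
    have Hj := ltn_ord j; have Hk0 := ltn_ord k.
    have Hj' := ltn_ord j'; have Hk0' := ltn_ord k'.
    rewrite /f /=; case: (ltnP k) => Hk; case: (ltnP k') => Hk' [] E1 E2.
    - have := congr1 val E2; rewrite /= !inordK; try lia.
      by case=> E3; rewrite E1; congr pair; apply: val_inj.
    - have := congr1 val E2; rewrite /= inordK; last lia.
      have := congr1 val E1; rewrite /= inordK; last lia.
      move=> E3 E4; exfalso; apply: (contra j) => //; try lia.
      by rewrite (_ : (logn p m).-1 = k); [exact: HV | lia].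
    - have := congr1 val E2; rewrite /= inordK; last lia.
      have := congr1 val E1; rewrite /= inordK; last lia.
      move=> E3 E4; exfalso; apply: (contra j') => //; try lia.
      by rewrite (_ : (logn p m).-1 = k'); [exact: HV' | lia].
    - have := congr1 val E1; rewrite /= !inordK; try lia.
      by case=> E3; rewrite E2; congr pair; apply: val_inj.
  rewrite -(card_in_imset finj); apply: subset_leq_card.
  by apply/subsetP => x /imsetP [jk Hjk ->]; exact: fS.
case: h0 => l0 [Hl0 Hc0].
have mono a b : (a <= b)%N -> (b <= l)%N -> (#|S a 0%R| <= #|S b 0%R|)%N.
  elim: b => [|b IH] Hab Hb; first by rewrite (_ : a = 0%N) //; lia.
  case: (leqP a b) => Hab'.
    by apply: leq_trans (IH Hab' (ltnW Hb)) (step b Hb).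
  by rewrite (_ : a = b.+1) //; lia.
have ex : exists a, (0 < #|S a 0%R|)%N by exists l0; rewrite Hc0.
case: (ex_minnP ex) => l1 Hpos Hmin.
have l1le : (l1 <= l0)%N by apply: Hmin; rewrite Hc0.
split; first by [].
exists l1; split; first lia.
split.
  by apply/eqP; rewrite eqn_leq Hpos -Hc0 mono //; lia.
move=> a Ha; apply: cards0_eq; apply/eqP; rewrite -leqn0 leqNgt; apply/negP => H.
by have := Hmin a H; lia.
Qed.
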